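(* Let $(E,\mathcal{D},\rho)$ and $(E,\mathcal{D},\phi)$ be U-matroids on the same lattice such that $\phi$ dominates $\rho$ (i.e., $\phi(S)\ge\rho(S)$ for all $S\in\mathcal{D}$), and let $a\in E$ with $\{a\}\notin\mathcal{D}$. Then the generous atom extension $\phi_a$ of $\phi$ to $\mathcal{D}[a]$ dominates every lattice extension of $\rho$ to $\mathcal{D}[a]$; that is, if $(E,\mathcal{D}[a],\rho')$ is a U-matroid with $\rho'|_\mathcal{D}=\rho$, then $\phi_a(S)\ge\rho'(S)$ for all $S\in\mathcal{D}[a]$.
   Context: An accessible distributive lattice on a finite set $E$ is a family $\mathcal{D}\subseteq 2^E$ containing $\emptyset$ and $E$, closed under union and intersection, such that every nonempty $A\in\mathcal{D}$ contains some $x$ with $A\setminus\{x\}\in\mathcal{D}$. A U-matroid is a triple $(E,\mathcal{D},\rho)$ with $\mathcal{D}$ an accessible distributive lattice and $\rho:\mathcal{D}\to\mathbb{N}$ satisfying $\rho(\emptyset)=0$; $\rho(A)\le\rho(B)$ whenever $A\subseteq B$; $\rho(A)+\rho(B)\ge\rho(A\cup B)+\rho(A\cap B)$; and $\rho(A\cup\{e\})-\rho(A)\le1$ whenever $A,A\cup\{e\}\in\mathcal{D}$. For $S\subseteq E$, $\sup_\mathcal{D}(S)=\bigcap\{B\in\mathcal{D}:B\supseteq S\}$. For $a\in E$ with $\{a\}\notin\mathcal{D}$, let $\mathcal{D}[a]=\mathcal{D}\cup\{S\cup\{a\}:S\in\mathcal{D}\}$. The generous atom extension $\phi_a:\mathcal{D}[a]\to\mathbb{N}$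 of $\phi$ is: $\phi_a(S)=\phi(S)$ if $S\in\mathcal{D}$; if $S\notin\mathcal{D}$ (so $S\setminus\{a\}\in\mathcal{D}$), $\phi_a(S)=\phi(S\setminus\{a\})$ when $\phi(S\setminus\{a\})=\phi(\sup_\mathcal{D}(S))$, and $\phi_a(S)=\phi(S\setminus\{a\})+1$ otherwise. *)

(* Defs.v *)
From mathcomp Require Import all_boot.
Set Implicit Arguments. Unset Strict Implicit. Unset Printing Implicit Defensive.

Section UMatroid.
Variable E : finType.

Definition accessible_distr_lattice (D : {set {set E}}) : Prop :=
  [/\ set0 \in D, [set: E] \in D,
      (forall A B, A \in D -> B \in D -> A :|: B \in D),
      (forall A B, A \in D -> B \in D -> A :&: B \in D) &
      (forall A, A \in D -> A != set0 -> exists2 x, x \in A & A :\ x \in D)].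

(* U-matroid (E, D, rho); rho is a total function on subsets but only its
   values on D matter. *)
Definition Umatroid (D : {set {set E}}) (rho : {set E} -> nat) : Prop :=
  [/\ accessible_distr_lattice D,
      rho set0 = 0,
      (forall A B, A \in D -> B \in D -> A \subset B -> rho A <= rho B),
      (forall A B, A \in D -> B \in D ->
         rho (A :|: B) + rho (A :&: B) <= rho A + rho B) &
      (forall A e, A \in D -> A :|: [set e] \in D ->
         rho (A :|: [set e]) <= rho A + 1)].

Definition supD (D : {set {set E}}) (S : {set E}) : {set E} :=
  \bigcap_(B in D | S \subset B) B.

Definition extD (D : {set {set E}}) (a : E) : {set {set E}} :=
  D :|: [set S :|: [set a] | S in D].

Definition generous (D : {set {set E}}) (phi : {set E} -> nat) (a : E)
  (S : {set E}) : nat :=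
  if S \in D then phi S
  else if phi (S :\ a) == phi (supD D S) then phi (S :\ a)
       else (phi (S :\ a)).+1.

End UMatroid.

(* Main.v *)
Require Import Defs.
From mathcomp Require Import all_boot.

Theorem proposition4p11 (E : finType) (D : {set {set E}})
  (rho phi rho' : {set E} -> nat) (a : E) :
  Umatroid D rho -> Umatroid D phi ->
  (forall S, S \in D -> rho S <= phi S) ->
  [set a] \notin D ->
  Umatroid (extD D a) rho' ->
  (forall S, S \in D -> rho' S = rho S) ->
  forall S, S \in extD D a -> rho' S <= generous D phi a S.
Proof.
move=> [[D0 DT DU DI Dacc] r0 rmon rsub runit] [_ p0 pmon psub punit] dom aD
  [_ r'0 r'mon r'sub r'unit] ext S SD.
rewrite /generous.
case: ifP => SinD.
  by rewrite ext // dom.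
move: SD; rewrite /extD inE SinD /= => /imsetP [T TD ST].
have aT : a \notin T.
  apply/negP => aT; move: SinD; rewrite ST.
  have -> : T :|: [set a] = T by apply/setUidPl; rewrite sub1set.
  by rewrite TD.
have ->: S :\ a = T.
  rewrite ST setDUl setDv setU0; apply/setDidPl.
  by rewrite disjoint_sym disjoints1.
have TinE : T \in extD D a by rewrite /extD inE TD.
have SinE : S \in extD D a by rewrite /extD inE; apply/orP; right; apply/imsetP; exists T.
case: ifP => /eqP Heq.
  set U := supD D S.
  have UD : U \in D.
    rewrite /U /supD; apply: (big_ind (fun X => X \in D)).
    - exact: DT.
    - by move=> x y Hx Hy; apply: DI.
    - by move=> i /andP [].
  have SU : S \subset U by apply/bigcapsP => B /andP [].
  have UE : U \in extD D a by rewrite /extD inE UD.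
  rewrite Heq; apply: leq_trans (r'mon _ _ SinE UE SU) _.
  by rewrite ext // dom.
have := r'unit T a TinE; rewrite -ST => /(_ SinE) H.
apply: leq_trans H _; rewrite ext // addn1 ltnS; exact: dom.
Qed.
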